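(* Let $k$ be an algebraically closed field of characteristic $p\ge0$, let $1\le s\le t$ be integers, let $R=k[x,y]/(x^s,y^t)$ with its standard grading $R=\bigoplus_{i=0}^{s+t-2}R_i$, and let $\theta$ be the image of $x+y$ in $R$. Then there exist nonzero homogeneous elements $\omega_0,\omega_1,\dots,\omega_{s-1}$ of $R$ with $\omega_i\in R_i$ for each $i$, such that $$R=\bigoplus_{i=0}^{s-1}k[\theta]\,\omega_i$$ as $k[\theta]$-modules (an internal direct sum of the cyclic submodules $k[\theta]\omega_i$, which give an indecomposable decomposition of $R$ as a $k[\theta]$-module).
   Context: $R_i$ is the $k$-span of the images of the monomials $x^ay^b$ with $a+b=i$, $a<s$, $b<t$. $k[\theta]$ is the $k$-subalgebra of $R$ generated by $\theta$, and $R$ is regarded as a $k[\theta]$-module by multiplication. *)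

(* Defs.v *)
From HB Require Import structures.
From mathcomp Require Import all_boot all_order all_algebra.
Set Implicit Arguments. Unset Strict Implicit. Unset Printing Implicit Defensive.
Import GRing.Theory.
Local Open Scope ring_scope.

(* Bivariate polynomials k[x,y] are modelled as {poly {poly k}}:
   the outer variable is y ('X), the inner one is x ('X%:P).
   The coefficient of x^a y^b in p is (p`_b)`_a. *)

Definition varx (k : nzRingType) : {poly {poly k}} := ('X)%:P.
Definition vary (k : nzRingType) : {poly {poly k}} := 'X.

Definition in_ideal_xs_yt (k : comNzRingType) (s t : nat) (p : {poly {poly k}}) : Prop :=
  exists u v : {poly {poly k}}, p = u * varx k ^+ s + v * vary k ^+ t.

Definition homog_of_deg (k : nzRingType) (i : nat) (p : {poly {poly k}}) : Prop :=
  forall a b : nat, (a + b)%N <> i -> (p`_b)`_a = 0.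

Definition theta (k : nzRingType) : {poly {poly k}} := varx k + vary k.

Definition eval_theta (k : comNzRingType) (f : {poly k}) : {poly {poly k}} :=
  (map_poly (fun c : k => c%:P%:P) f).[theta k].

(* Main.v *)
Require Import Defs.
From HB Require Import structures.
From mathcomp Require Import all_boot all_order all_algebra.
From Stdlib Require Import Classical.
From mathcomp Require Import zify ring.
Set Implicit Arguments. Unset Strict Implicit. Unset Printing Implicit Defensive.
Import GRing.Theory.
Local Open Scope ring_scope.

Section Main.
Variable k : fieldType.
Variables s t : nat.
Hypothesis s1 : (1 <= s)%N.
Hypothesis st : (s <= t)%N.

Local Notation P := {poly {poly k}}.
Local Notation I := (@in_ideal_xs_yt k s t).
Local Notation x := (varx k).
Local Notation y := (vary k).
Local Notation th := (theta k).
Definition C (c : k) : P := c%:P%:P.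
Definition cf (p : P) (a b : nat) : k := (p`_b)`_a.

Lemma I0 : I 0.
Proof. by exists 0, 0; rewrite !mul0r addr0. Qed.
Lemma ID p q : I p -> I q -> I (p + q).
Proof.
move=> [u [v ->]] [u' [v' ->]]; exists (u + u'), (v + v').
by rewrite !mulrDl addrACA.
Qed.
Lemma IM r p : I p -> I (r * p).
Proof.
move=> [u [v ->]]; exists (r * u), (r * v).
by rewrite mulrDr !mulrA.
Qed.
Lemma IN p : I p -> I (- p).
Proof. by move=> h; rewrite -mulN1r; apply: IM. Qed.
Lemma IB p q : I p -> I q -> I (p - q).
Proof. by move=> hp hq; apply: ID => //; apply: IN. Qed.
Lemma Isum (J : finType) (F : J -> P) : (forall j, I (F j)) -> I (\sum_j F j).
Proof. by move=> h; apply: (big_ind I I0 ID). Qed.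
Lemma Ixs q a : (s <= a)%N -> I (q * x ^+ a).
Proof.
move=> h; exists (q * x ^+ (a - s)), 0.
by rewrite mul0r addr0 -mulrA -exprD subnK.
Qed.
Lemma Iyt q b : (t <= b)%N -> I (q * y ^+ b).
Proof.
move=> h; exists 0, (q * y ^+ (b - t)).
by rewrite mul0r add0r -mulrA -exprD subnK.
Qed.

Lemma Ixs' q a : (s <= a)%N -> I (x ^+ a * q).
Proof. by move=> h; rewrite mulrC; apply: Ixs. Qed.
Lemma Iyt' q b : (t <= b)%N -> I (y ^+ b * q).
Proof. by move=> h; rewrite mulrC; apply: Iyt. Qed.

Lemma Ith q : I (th ^+ (s + t) * q).
Proof.
rewrite /theta exprDn mulr_suml; apply: Isum => i.
rewrite -mulr_natr.
case: (leqP s (s + t - i)) => h.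
  by rewrite -!mulrA; apply: Ixs'.
have hi : (t <= i)%N.
  have := ltn_ord i; rewrite ltnS => h2.
  by move: h h2; clear; lia.
rewrite mulrAC -!mulrA mulrCA; apply: IM; rewrite mulrCA; exact: Iyt'.
Qed.

Lemma cfD p q a b : cf (p + q) a b = cf p a b + cf q a b.
Proof. by rewrite /cf !coefD. Qed.
Lemma cfN p a b : cf (- p) a b = - cf p a b.
Proof. by rewrite /cf !coefN. Qed.
Lemma cf0 a b : cf 0 a b = 0.
Proof. by rewrite /cf !coef0. Qed.
Lemma cf_sum (J : finType) (F : J -> P) a b : cf (\sum_j F j) a b = \sum_j cf (F j) a b.
Proof. by rewrite /cf !coef_sum. Qed.
Lemma cfC c p a b : cf (C c * p) a b = c * cf p a b.
Proof. by rewrite /cf /C !coefCM. Qed.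
Lemma cfx p a b : cf (x * p) a b = if a == 0%N then 0 else cf p a.-1 b.
Proof. by rewrite /cf /varx coefCM coefXM. Qed.
Lemma cfy p a b : cf (y * p) a b = if b == 0%N then 0 else cf p a b.-1.
Proof. by rewrite /cf /vary coefXM; case: ifP; rewrite ?coef0. Qed.
Lemma cfxn n a b : cf (x ^+ n) a b = ((a == n) && (b == 0%N))%:R.
Proof.
rewrite /cf /varx -rmorphXn coefC; case: (b == 0%N); rewrite ?andbF ?coef0 //.
by rewrite coefXn andbT.
Qed.

Definition box p := forall a b, (a < s)%N -> (b < t)%N -> cf p a b = 0.

Lemma I_box p : I p -> box p.
Proof.
move=> [u [v ->]] a b ha hb.
rewrite cfD /cf /varx -rmorphXn coefMC coefMXn ha /vary coefMXn hb coef0.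
by rewrite add0r.
Qed.

Lemma polyC_expand (g : {poly k}) : g%:P = \sum_(a < size g) C g`_a * x ^+ a :> P.
Proof.
rewrite -{1}(coefK g) poly_def rmorph_sum /=; apply: eq_bigr => a _.
by rewrite -mul_polyC rmorphM /= rmorphXn.
Qed.

Lemma box_I p : box p -> I p.
Proof.
move=> h.
rewrite -[p]coefK poly_def; apply: Isum => b.
rewrite -mul_polyC polyC_expand mulr_suml.
apply: Isum => a.
case: (leqP s a) => ha.
  by rewrite mulrAC; apply: Ixs.
case: (leqP t b) => hb.
  by rewrite /vary; apply: Iyt.
by move: (h a b ha hb); rewrite /cf => ->; rewrite /C !mul0r; exact: I0.
Qed.


Lemma hom0 i : @homog_of_deg k i (0 : P).
Proof. by move=> a b _; rewrite coef0 coef0. Qed.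
Lemma homD i p q : @homog_of_deg k i p -> @homog_of_deg k i q -> @homog_of_deg k i (p + q).
Proof. by move=> hp hq a b h; rewrite !coefD hp // hq // addr0. Qed.
Lemma homC i c p : @homog_of_deg k i p -> @homog_of_deg k i (C c * p).
Proof. by move=> hp a b h; have := cfC c p a b; rewrite /cf => ->; rewrite hp // mulr0. Qed.
Lemma hom_sum i (J : finType) (F : J -> P) : (forall j, @homog_of_deg k i (F j)) -> @homog_of_deg k i (\sum_j F j).
Proof. by move=> h; apply: (big_ind (@homog_of_deg k i)) => //; [exact: hom0 | move=> ? ?; exact: homD]. Qed.
Lemma hom_xn n : @homog_of_deg k n (x ^+ n).
Proof.
move=> a b h; have := cfxn n a b; rewrite /cf => ->.
case: eqP => [ea|] //=; case: eqP => [eb|] //=; by case: h; rewrite ea eb addn0.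
Qed.
Lemma hom_th i p : @homog_of_deg k i p -> @homog_of_deg k i.+1 (th * p).
Proof.
move=> hp a b h; rewrite /theta mulrDl.
have := cfD (x * p) (y * p) a b; rewrite /cf => ->.
have := cfx p a b; rewrite /cf => ->.
have := cfy p a b; rewrite /cf => ->.
case: a h => [|a] h /=; case: b h => [|b] h /=.
- by rewrite addr0.
- rewrite add0r hp //; lia.
- rewrite addr0 hp //; lia.
- rewrite !hp ?addr0 //; lia.
Qed.
Lemma hom_thX i j p : @homog_of_deg k i p -> @homog_of_deg k (j + i) (th ^+ j * p).
Proof.
move=> hp; elim: j => [|j IH]; first by rewrite expr0 mul1r.
by rewrite exprS -mulrA addSn; apply: hom_th.
Qed.

Lemma evE f : eval_theta f = \sum_(j < size f) C f`_j * th ^+ j.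
Proof.
rewrite /eval_theta (@horner_coef_wide _ (size f)); last first.
  by rewrite /map_poly size_poly.
by apply: eq_bigr => j _; rewrite coef_map_id0.
Qed.

Lemma ev_comp f : eval_theta f = (map_poly (polyC \o polyC) f).[th].
Proof. by []. Qed.

Lemma evM f g : @eval_theta k (f * g) = eval_theta f * eval_theta g.
Proof. by rewrite !ev_comp rmorphM hornerM. Qed.
Lemma evD f g : @eval_theta k (f + g) = eval_theta f + eval_theta g.
Proof. by rewrite !ev_comp rmorphD hornerD. Qed.
Lemma evC c : @eval_theta k c%:P = C c.
Proof. by rewrite ev_comp map_polyC hornerC. Qed.
Lemma evXn n : @eval_theta k 'X^n = th ^+ n.
Proof. by rewrite ev_comp map_polyXn hornerXn. Qed.


Definition psi (p : P) : {poly k} := p.[- 'X].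
Definition Dt (r : P) := exists q, r = th * q.
Lemma Dt0 : Dt 0. Proof. by exists 0; rewrite mulr0. Qed.
Lemma DtD p q : Dt p -> Dt q -> Dt (p + q).
Proof. by move=> [u ->] [v ->]; exists (u + v); rewrite mulrDr. Qed.
Lemma DtM r p : Dt p -> Dt (r * p).
Proof. by move=> [u ->]; exists (r * u); rewrite mulrCA. Qed.
Lemma Dt_sum (J : finType) (F : J -> P) : (forall j, Dt (F j)) -> Dt (\sum_j F j).
Proof. by move=> h; apply: (big_ind Dt Dt0 DtD). Qed.

Lemma psi_diff p : Dt (p - (psi p)%:P).
Proof.
rewrite /psi horner_coef -{1}[p]coefK poly_def rmorph_sum -sumrB.
apply: Dt_sum => b.
rewrite -mul_polyC rmorphM /= -mulrBr; apply: DtM.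
rewrite rmorphXn rmorphN /=.
rewrite subrXX; exists (\sum_(i < b) 'X ^+ (b.-1 - i) * (- ('X)%:P) ^+ i).
by rewrite opprK /theta /varx /vary addrC.
Qed.

Lemma psi_rm : (psi \o id) = psi. Proof. by []. Qed.

Lemma notI n u : (n < s)%N -> ~ I (x ^+ n + th * u).
Proof.
move=> hn [a [b]] /(congr1 (fun r : P => (psi r)`_n)).
rewrite /psi !hornerD !hornerM !hornerXn /theta /varx /vary hornerD hornerC hornerX.
rewrite -!(rmorphXn (@polyC _)) !hornerC addrN mul0r addr0 coefXn eqxx.
rewrite coefD coefMXn hn add0r exprNn mulrA coefMXn (leq_trans hn st).
by move/eqP; rewrite oner_eq0.
Qed.


Definition cand n (w : P) := @homog_of_deg k n w /\ exists u, w = x ^+ n + th * u.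
Definition good n (w : P) :=
  cand n w /\ forall w' j, cand n w' -> I (th ^+ j * w') -> I (th ^+ j * w).

Lemma ex_min (Q : nat -> Prop) : (exists n, Q n) -> exists n, Q n /\ forall m, Q m -> (n <= m)%N.
Proof.
move=> [n0 Hn0].
suff H : forall N n, (n <= N)%N -> Q n -> exists n, Q n /\ forall m, Q m -> (n <= m)%N.
  exact: (H n0 n0).
elim=> [|N IH] n hn Qn.
  exists n; split => // m _; move: hn; rewrite leqn0 => /eqP ->; done.
case: (classic (exists m, Q m /\ (m < n)%N)) => [[m [Qm hm]]|H].
  by apply: (IH m) => //; rewrite -ltnS; apply: leq_trans hm hn.
exists n; split => // m Qm; rewrite leqNgt; apply/negP => hm; apply: H; by exists m.
Qed.

Lemma cand_xn n : cand n (x ^+ n).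
Proof. split; first exact: hom_xn. by exists 0; rewrite mulr0 addr0. Qed.

Lemma good_ex n : exists w, good n w.
Proof.
have [e [[w [cw Iw]] emin]] := ex_min (Q := fun e => exists w, cand n w /\ I (th ^+ e * w))
   (ex_intro _ (s + t)%N (ex_intro _ (x ^+ n) (conj (cand_xn n) (Ith _)))).
exists w; split => // w' j cw' Iw'.
have ej : (e <= j)%N by apply: emin; exists w'.
by rewrite -(subnK ej) exprD -mulrA; apply: IM.
Qed.

Lemma fin_choice (T : Type) (x0 : T) (Q : nat -> T -> Prop) m :
  (forall n, exists w, Q n w) -> exists W : nat -> T, forall n, (n < m)%N -> Q n (W n).
Proof.
move=> H; elim: m => [|m [W HW]]; first by exists (fun _ => x0).
have [w Hw] := H m.
exists (fun n => if n == m then w else W n) => n; rewrite ltnS leq_eqVlt.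
by case: eqP => [->|_] //= /HW.
Qed.


Lemma polyC_poly n (E : nat -> k) : (\poly_(a < n) E a)%:P = \sum_(a < n) C (E a) * x ^+ a :> P.
Proof.
rewrite poly_def rmorph_sum /=; apply: eq_bigr => a _.
by rewrite -mul_polyC rmorphM /= rmorphXn.
Qed.

Variable W : nat -> P.
Hypothesis HW : forall n, (n < s)%N -> good n (W n).

Definition Wsum (f : 'I_s -> {poly k}) := \sum_(i < s) eval_theta (f i) * W i.

Lemma span1 p : exists f, exists q, I (p - Wsum f - th * q).
Proof.
pose g := psi p.
pose D : P := (g - \poly_(a < s) g`_a)%:P.
have ID : I D.
  apply: box_I => a b ha hb; rewrite /cf /D coefC; case: (b == 0%N); last by rewrite coef0.
  by rewrite coefB coef_poly ha subrr.
have Dt3 : Dt ((\poly_(a < s) g`_a)%:P - Wsum (fun a => (g`_a)%:P)).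
  rewrite polyC_poly /Wsum -sumrB; apply: Dt_sum => a.
  have [[_ [u ->]] _] := HW (ltn_ord a).
  rewrite evC -mulrBr; apply: DtM; exists (- u); rewrite mulrN; ring.
have [q1 e1] := psi_diff p.
have [q3 e3] := Dt3.
exists (fun a => (g`_a)%:P), (q1 + q3).
suff -> : p - Wsum (fun a => (g`_a)%:P) - th * (q1 + q3) = D by [].
rewrite mulrDr -e1 -e3 /D rmorphB /= /g; ring.
Qed.


Lemma Wsum_add N f f' : Wsum f + th ^+ N * Wsum f' = Wsum (fun i => f i + 'X^N * f' i).
Proof.
rewrite /Wsum mulr_sumr -big_split /=; apply: eq_bigr => i _.
by rewrite evD evM evXn mulrDl mulrA.
Qed.

Lemma spanN N p : exists f, exists q, I (p - Wsum f - th ^+ N * q).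
Proof.
elim: N p => [|N IH] p.
  by exists (fun _ => 0), p; rewrite expr0 mul1r /Wsum big1 ?subr0 ?subrr; [exact: I0 | move=> i _; rewrite /eval_theta map_poly0 horner0 mul0r].
have [f [q Iq]] := IH p.
have [f' [q' Iq']] := span1 q.
exists (fun i => f i + 'X^N * f' i), q'.
rewrite -Wsum_add.
have -> : p - (Wsum f + th ^+ N * Wsum f') - th ^+ N.+1 * q' =
   (p - Wsum f - th ^+ N * q) + th ^+ N * (q - Wsum f' - th * q').
  rewrite exprSr; ring.
by apply: ID => //; apply: IM.
Qed.

Lemma span p : exists f, I (p - Wsum f).
Proof.
have [f [q Iq]] := spanN (s + t) p.
exists f; have -> : p - Wsum f = (p - Wsum f - th ^+ (s + t) * q) + th ^+ (s + t) * q by ring.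
by apply: ID => //; apply: Ith.
Qed.


Lemma single m j0 (F : nat -> k) : (forall j, j != j0 -> F j = 0) -> ((m <= j0)%N -> F j0 = 0) ->
  \sum_(j < m) F j = F j0.
Proof.
move=> h1 h2; case: (ltnP j0 m) => hj.
  rewrite (bigD1 (Ordinal hj)) //= big1 ?addr0 // => j /eqP hne; apply: h1.
  by apply/eqP => e; apply: hne; apply: val_inj.
by rewrite h2 // big1 // => j _; apply: h1; rewrite neq_ltn (leq_trans (ltn_ord j) hj).
Qed.

Lemma cfE f n w a b : @homog_of_deg k n w ->
  cf (eval_theta f * w) a b =
  if (n <= a + b)%N then f`_(a + b - n) * cf (th ^+ (a + b - n) * w) a b else 0.
Proof.
move=> hw; rewrite evE mulr_suml cf_sum.
under eq_bigr => j _ do rewrite -mulrA cfC.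
have hz : forall j, (j + n != a + b)%N -> f`_j * cf (th ^+ j * w) a b = 0.
  by move=> j hj; rewrite /cf (hom_thX (j:=j) hw) ?mulr0 //; apply/eqP; rewrite eq_sym.
case: ifP => hn.
  rewrite (@single _ (a + b - n)%N (fun j => f`_j * cf (th ^+ j * w) a b)) //.
    by move=> j hj; apply: hz; apply: contra hj => /eqP <-; rewrite addnK.
  by move=> hs; rewrite nth_default // mul0r.
rewrite big1 // => j _; apply: hz; apply/eqP => e; move: hn; rewrite -e leq_addl.
  done.
Qed.

Lemma Cmul a b : C a * C b = C (a * b).
Proof. by rewrite /C !polyCM. Qed.

Lemma mini d (c : nat -> k) m : (m <= s)%N -> (forall n, (d < n)%N -> c n = 0) ->
  I (\sum_(n < m) C (c n) * (th ^+ (d - n) * W n)) ->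
  forall n, (n < m)%N -> I (C (c n) * (th ^+ (d - n) * W n)).
Proof.
move=> + cd; elim: m => [//|m IH] hm Hsum.
have Tm : I (C (c m) * (th ^+ (d - m) * W m)).
  case: (eqVneq (c m) 0) => [->|cm0].
    by rewrite /C !rmorph0 mul0r; exact: I0.
  have md : (m <= d)%N by rewrite leqNgt; apply/negP => /cd; apply/eqP.
  pose w' := C (c m)^-1 * \sum_(n < m.+1) C (c n) * (th ^+ (m - n) * W n).
  have e1 : th ^+ (d - m) * w' = C (c m)^-1 * \sum_(n < m.+1) C (c n) * (th ^+ (d - n) * W n).
    rewrite /w' mulrCA mulr_sumr; congr (_ * _); apply: eq_bigr => n _.
    rewrite mulrCA; congr (_ * _); rewrite mulrA -exprD; congr (_ ^+ _ * _).
    have := ltn_ord n; rewrite ltnS => hn; lia.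
  have cw' : cand m w'.
    split.
      apply: homC; apply: hom_sum => n.
      apply: homC; have := hom_thX (j := m - n) (HW (n := n) _).1.1.
      have hn : (n <= m)%N by rewrite -ltnS.
      rewrite subnK //; apply; apply: leq_ltn_trans (leq_trans hn _) hm; done.
    have [[_ [u eu]] _] := HW hm.
    exists (C (c m)^-1 * \sum_(n < m) C (c n) * (th ^+ (m - n.+1) * W n) + u).
    rewrite /w' big_ord_recr /= subnn expr0 mul1r eu.
    have hS : \sum_(i < m) C (c i) * (th ^+ (m - i) * W i) =
              th * \sum_(i < m) C (c i) * (th ^+ (m - i.+1) * W i).
      rewrite mulr_sumr; apply: eq_bigr => n _.
      by rewrite -(subnSK (ltn_ord n)) exprS; ring.
    have hinv : C (c m)^-1 * C (c m) = 1 by rewrite Cmul mulVf // /C polyC1.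
    rewrite hS mulrDr [C (c m)^-1 * (C (c m) * _)]mulrA hinv mul1r; ring.
  have := (HW hm).2 w' (d - m)%N cw'.
  rewrite e1 => /(_ (IM _ Hsum)) h.
  by apply: IM.
move=> n; rewrite ltnS leq_eqVlt => /orP [/eqP -> //|hn].
apply: IH (ltnW hm) _ n hn.
move: (IB Hsum Tm); rewrite big_ord_recr /= addrK; done.
Qed.


Lemma direct f : I (Wsum f) -> forall i : 'I_s, I (eval_theta (f i) * W i).
Proof.
move=> H i; apply: box_I => a b ha hb.
pose d := (a + b)%N.
pose c n := odflt 0 (omap (fun j : 'I_s => if (n <= d)%N then (f j)`_(d - n) else 0) (insub n)).
have cE : forall j : 'I_s, c j = if (j <= d)%N then (f j)`_(d - j) else 0.
  by move=> j; rewrite /c valK.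
have cd : forall n, (d < n)%N -> c n = 0.
  move=> n hn; rewrite /c; case: insub => //= j.
  by rewrite leqNgt hn.
pose S := \sum_(n < s) C (c n) * (th ^+ (d - n) * W n).
have IS : I S.
  apply: box_I => a' b' ha' hb'; rewrite cf_sum.
  case: (eqVneq (a' + b')%N d) => ed.
    have h0 := I_box H ha' hb'; rewrite /Wsum cf_sum in h0.
    transitivity (\sum_j cf (eval_theta (f j) * W j) a' b'); last exact: h0.
    apply: eq_bigr => j _; rewrite cfC (cfE (f j) a' b' (HW (ltn_ord j)).1.1).
    by rewrite cE ed; case: ifP => _; rewrite ?mul0r.
  rewrite big1 // => j _; rewrite cfC cE; case: ifP => hj; last by rewrite mul0r.
  rewrite /cf (hom_thX (j := (d - j)%N) (HW (ltn_ord j)).1.1) ?mulr0 //.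
  by rewrite subnK //; apply/eqP.
have := I_box (mini (leqnn s) cd IS (ltn_ord i)) ha hb.
rewrite cfC cE (cfE (f i) a b (HW (ltn_ord i)).1.1).
by rewrite /d; case: ifP.
Qed.

End Main.

Theorem theorem2p12 (k : closedFieldType) (s t : nat) :
  (1 <= s)%N -> (s <= t)%N ->
  exists omega : 'I_s -> {poly {poly k}},
    (forall i : 'I_s, homog_of_deg i (omega i) /\ ~ in_ideal_xs_yt s t (omega i)) /\
    (* the submodules k[theta] omega_i span R *)
    (forall r : {poly {poly k}}, exists f : 'I_s -> {poly k},
        in_ideal_xs_yt s t (r - \sum_(i < s) eval_theta (f i) * omega i)) /\
    (* the sum is direct *)
    (forall f : 'I_s -> {poly k},
        in_ideal_xs_yt s t (\sum_(i < s) eval_theta (f i) * omega i) ->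
        forall i : 'I_s, in_ideal_xs_yt s t (eval_theta (f i) * omega i)).
Proof.
move=> s1 st.
have [W HW] := fin_choice 0 s (@good_ex k s t).
exists (fun i => W i); split; [|split].
- move=> i; have [[hom [u eu]] _] := HW i (ltn_ord i).
  split => //; rewrite eu; exact: notI.
- move=> r; exact: (span HW r).
- move=> f; apply: (@direct k s t) => //.
Qed.
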